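(* Let $U=(u_{ij})\in\mathcal{U}_d(\mathbb{C})$. For every $M\in\mathbb{N}$ there exist $D_1,\dots,D_{2M}\in\mathcal{DU}_d(\mathbb{C})$ such that for all $k,l\in\{1,\dots,d\}$, $$\left((P_U^TP_U)^M\right)_{kl}=0\iff\left(D_1U^\dagger D_2U\cdots D_{2M-1}U^\dagger D_{2M}U\right)_{kl}=0.$$
   Context: $\mathcal{U}_d(\mathbb{C})$ denotes the group of $d\times d$ unitary matrices and $\mathcal{DU}_d(\mathbb{C})$ its subgroup of diagonal unitary matrices. $P_U=(p_{ij})$ is the $0/1$ matrix with $p_{ij}=0$ if $u_{ij}=0$ and $p_{ij}=1$ if $u_{ij}\neq0$. *)

(* Defs.v *)
From mathcomp Require Import all_boot all_order all_algebra.
Set Implicit Arguments. Unset Strict Implicit. Unset Printing Implicit Defensive.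
Import Order.TTheory GRing.Theory Num.Theory.
Local Open Scope ring_scope.

Section Defs.
Variable C : numClosedFieldType.

Definition adjmx (d : nat) (U : 'M[C]_d) : 'M[C]_d := (map_mx Num.conj U)^T.

Definition unitary_mx (d : nat) (U : 'M[C]_d) : Prop :=
  U *m adjmx U = 1%:M /\ adjmx U *m U = 1%:M.

Definition diag_unitary_mx (d : nat) (D : 'M[C]_d) : Prop :=
  (forall i j : 'I_d, i != j -> D i j = 0) /\ (forall i : 'I_d, `|D i i| = 1).

Definition pattern_mx (d : nat) (U : 'M[C]_d) : 'M[nat]_d :=
  \matrix_(i, j) (if U i j == 0 then 0%N else 1%N).

(* D_1 U^dagger D_2 U ... D_{2M-1} U^dagger D_{2M} U, with D_{k+1} = D k *)
Definition alt_prod (d : nat) (U : 'M[C]_d) (D : nat -> 'M[C]_d) (M : nat)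
  : 'M[C]_d :=
  foldr (fun i A => D (2 * i)%N *m adjmx U *m D (2 * i).+1 *m U *m A)
        1%:M (iota 0 M).
End Defs.

Definition mxpow_nat (d : nat) (A : 'M[nat]_d) (M : nat) : 'M[nat]_d :=
  iter M (fun B => B *m A) 1%:M.

(* Main.v *)
Require Import Defs.
From mathcomp Require Import all_boot all_order all_algebra.
From mathcomp Require Import ring zify.
Import Order.TTheory GRing.Theory Num.Theory.
Local Open Scope ring_scope.

Lemma ni_neq0 (C : numClosedFieldType) (n : nat) (s : C) : s ^+ 2 = 1 ->
  n%:R + s * 'i != 0 :> C.
Proof.
move=> hs; apply/eqP => h.
have : (n%:R : C) ^+ 2 = - 1.
  move/eqP: h; rewrite addr_eq0 => /eqP ->.
  by rewrite sqrrN exprMn hs sqrCi mul1r.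
move/eqP; rewrite -subr_eq0 opprK -natrX.
by rewrite natr1 pnatr_eq0.
Qed.

Definition cay (C : numClosedFieldType) (n : nat) : C := (n%:R + 'i) / (n%:R - 'i).

Lemma cay_norm (C : numClosedFieldType) n : `|cay C n| = 1.
Proof.
have h1 := @ni_neq0 C n 1 (expr1n _ _).
have h2 := @ni_neq0 C n (-1) (ltac:(by rewrite sqrrN expr1n)).
rewrite mul1r in h1; rewrite mulN1r in h2.
rewrite /cay normf_div.
have -> : n%:R - 'i = (n%:R + 'i : C)^* by rewrite rmorphD /= conjC_nat conjCi.
by rewrite norm_conjC divff // normr_eq0.
Qed.

Lemma cay_inj (C : numClosedFieldType) : injective (cay C).
Proof.
move=> n m.
have hn := @ni_neq0 C n (-1) (ltac:(by rewrite sqrrN expr1n)).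
have hm := @ni_neq0 C m (-1) (ltac:(by rewrite sqrrN expr1n)).
rewrite mulN1r in hn hm.
rewrite /cay => /eqP; rewrite eqr_div // => /eqP h.
have : (2%:R * 'i) * (m%:R - n%:R) = 0 :> C.
  have -> : 2 * 'i * (m%:R - n%:R) = (n%:R + 'i) * (m%:R - 'i) - (m%:R + 'i) * (n%:R - 'i) :> C by ring.
  by rewrite h subrr.
move/eqP; rewrite mulf_eq0 => /orP[|].
  rewrite mulf_eq0 pnatr_eq0 /= => /eqP hi.
  by move: (@ni_neq0 C 0 1 (expr1n _ _)); rewrite mul1r add0r hi eqxx.
by rewrite subr_eq0 eqr_nat => /eqP ->.
Qed.

Lemma unit_avoid (C : numClosedFieldType) (Q : {poly C}) : Q != 0 ->
  exists z : C, `|z| = 1 /\ ~~ root Q z.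
Proof.
move=> hQ.
case hall: (all (root Q) (map (cay C) (iota 0 (size Q)))).
  have := max_poly_roots hQ hall.
  rewrite (map_inj_uniq (@cay_inj C)) iota_uniq size_map size_iota ltnn.
  by move/(_ isT).
move/negbT: hall => /allPn [z /mapP [n _ ->] hz].
by exists (cay C n); split => //; apply: cay_norm.
Qed.

Definition dg (C : numClosedFieldType) n (z : C) : 'M[C]_n := diag_mx (\row_(a < n) z ^+ a).
Arguments dg {C} n z.

Lemma dg_unitary (C : numClosedFieldType) n (z : C) : `|z| = 1 ->
  (forall i j : 'I_n, i != j -> dg n z i j = 0) /\ (forall i : 'I_n, `|dg n z i i| = 1).
Proof.
move=> hz; split.
  by move=> i j hij; rewrite /dg !mxE (negbTE hij) mulr0n.
by move=> i; rewrite /dg !mxE eqxx mulr1n normrX hz expr1n.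
Qed.

Lemma G (C : numClosedFieldType) m n p (A : 'M[C]_(m,n)) (V : 'M[C]_(n,p)) :
  exists z : C, `|z| = 1 /\ forall k l,
    ((A *m dg n z *m V) k l == 0) = ~~ [exists a, (A k a != 0) && (V a l != 0)].
Proof.
pose q k l : {poly C} := \sum_(a < n) (A k a * V a l) *: 'X^a.
have qE : forall k l z, (A *m dg n z *m V) k l = (q k l).[z].
  move=> k l z; rewrite /q horner_sum mul_mx_diag !mxE.
  by apply: eq_bigr => a _; rewrite !mxE hornerZ hornerXn mulrAC.
have qc : forall k l (a : 'I_n), (q k l)`_a = A k a * V a l.
  move=> k l a; rewrite /q coef_sum (bigD1 a) //= coefZ coefXn eqxx mulr1.
  rewrite big1 ?addr0 // => b hb; rewrite coefZ coefXn.
  by rewrite (_ : (a == b :> nat) = false) ?mulr0 //; apply/negbTE; rewrite eq_sym.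
have q0 : forall k l, (q k l == 0) = ~~ [exists a, (A k a != 0) && (V a l != 0)].
  move=> k l; apply/idP/idP.
    move/eqP=> h; apply/existsP => [[a /andP [ha hv]]].
    by move: (qc k l a); rewrite h coef0 => /esym/eqP; rewrite mulf_eq0 (negbTE ha) (negbTE hv).
  move=> /existsPn h; rewrite /q big1 // => a _.
  move: (h a); rewrite negb_and !negbK => /orP [] /eqP ->; by rewrite ?mul0r ?mulr0 scale0r.
pose Q := \prod_(kl : 'I_m * 'I_p | q kl.1 kl.2 != 0) q kl.1 kl.2.
have hQ : Q != 0.
  by apply/prodf_eq0 => [[kl /negbTE -> ]].
have [z [hz hr]] := @unit_avoid _ Q hQ.
exists z; split => // k l; rewrite qE -q0.
case h: (q k l == 0); first by rewrite (eqP h) horner0 eqxx.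
apply/negbTE; apply: contra hr => hq0.
rewrite /root /Q horner_prod; apply/prodf_eq0; exists (k, l) => //=.
by rewrite h.
Qed.

Lemma foldr_mulmx (C : numClosedFieldType) d (U : 'M[C]_d) (D : nat -> 'M[C]_d) s (X : 'M[C]_d) :
  foldr (fun i A => D (2 * i)%N *m adjmx U *m D (2 * i).+1 *m U *m A) X s =
  foldr (fun i A => D (2 * i)%N *m adjmx U *m D (2 * i).+1 *m U *m A) 1%:M s *m X.
Proof. by elim: s => [|i s IH] /=; rewrite ?mul1mx // IH mulmxA. Qed.

Lemma alt_prod_S (C : numClosedFieldType) d (U : 'M[C]_d) (D : nat -> 'M[C]_d) M :
  alt_prod U D M.+1 = alt_prod U D M *m (D (2 * M)%N *m adjmx U *m D (2 * M).+1 *m U).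
Proof.
rewrite /alt_prod (_ : iota 0 M.+1 = iota 0 M ++ [:: M]); last by rewrite -addn1 iotaD.
rewrite foldr_cat /= foldr_mulmx; congr (_ *m _).
by rewrite mulmx1.
Qed.

Lemma alt_prod_ext (C : numClosedFieldType) d (U : 'M[C]_d) (D D' : nat -> 'M[C]_d) M :
  (forall n, (n < 2 * M)%N -> D n = D' n) -> alt_prod U D M = alt_prod U D' M.
Proof.
elim: M => [//|M IH] h; rewrite !alt_prod_S IH; last by move=> n hn; apply: h; lia.
by rewrite !h //; lia.
Qed.

Lemma nat_mul0 d (X Y : 'M[nat]_d) k l :
  ((X *m Y) k l == 0%N) = ~~ [exists a, (X k a != 0%N) && (Y a l != 0%N)].
Proof.
rewrite !mxE sum_nat_eq0 negb_exists; apply: eq_forallb => a.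
by rewrite muln_eq0 negb_and !negbK.
Qed.

Lemma pat_neq0 (C : numClosedFieldType) d (U : 'M[C]_d) a l :
  (((pattern_mx U)^T *m pattern_mx U) a l != 0%N) = [exists j, (U j a != 0) && (U j l != 0)].
Proof.
apply: negb_inj; rewrite negbK nat_mul0; congr (~~ _); apply: eq_existsb => j.
by rewrite !mxE; case: (U j a == 0); case: (U j l == 0).
Qed.

Theorem lemma24 (C : numClosedFieldType) (d : nat) (U : 'M[C]_d)
  (hU : unitary_mx U) (M : nat) :
  exists D : nat -> 'M[C]_d,
    (forall n, (n < 2 * M)%N -> diag_unitary_mx (D n)) /\
    forall k l : 'I_d,
      (mxpow_nat ((pattern_mx U)^T *m pattern_mx U) M) k l = 0%N <->
      (alt_prod U D M) k l = 0.
Proof.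
elim: M => [|M [D [hD hE]]].
  exists (fun _ => 1%:M); split => // k l.
  rewrite /alt_prod /mxpow_nat /= !mxE.
  by case: (k == l); split => // /eqP; rewrite ?oner_eq0.
set A := alt_prod U D M.
have [z1 [hz1 h1]] := @G _ _ _ _ A (adjmx U).
set B := A *m dg d z1 *m adjmx U.
have [z2 [hz2 h2]] := @G _ _ _ _ B U.
pose D' n := if n == (2 * M)%N then dg d z1 else if n == (2 * M).+1 then dg d z2 else D n.
exists D'; split.
  move=> n hn; rewrite /D'.
  case: eqP => e1; first exact: dg_unitary.
  case: eqP => e2; first exact: dg_unitary.
  by apply: hD; lia.
have -> : alt_prod U D' M.+1 = B *m dg d z2 *m U.
  rewrite alt_prod_S (@alt_prod_ext _ _ _ D' D); last first.
    by move=> n hn; rewrite /D'; case: eqP => [?|_]; [lia|case: eqP => [?|_] //; lia].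
  rewrite /D' eqxx (_ : ((2 * M).+1 == 2 * M)%N = false); last by apply/eqP; lia.
  by rewrite eqxx /B -/A !mulmxA.
have hb : forall k a, (mxpow_nat ((pattern_mx U)^T *m pattern_mx U) M k a == 0%N) = (A k a == 0).
  by move=> k a; apply/eqP/eqP; apply hE.
move=> k l; rewrite /mxpow_nat /= -/(mxpow_nat _ M).
suff H : ((mxpow_nat ((pattern_mx U)^T *m pattern_mx U) M *m ((pattern_mx U)^T *m pattern_mx U)) k l == 0%N) = ((B *m dg d z2 *m U) k l == 0).
  by split => /eqP h; apply/eqP; [rewrite -H | rewrite H].
rewrite nat_mul0 h2; congr (~~ _).
apply/existsP/existsP.
  move=> [a /andP [ha]]; rewrite pat_neq0 => /existsP [j /andP [hja hjl]].
  exists j; rewrite hjl andbT.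
  have := h1 k j; rewrite -[B k j == 0]/((A *m dg d z1 *m adjmx U) k j == 0) => ->.
  rewrite negbK; apply/existsP; exists a.
  rewrite hb in ha; by rewrite ha /adjmx !mxE conjC_eq0 hja.
move=> [j /andP [hB hjl]].
move: hB; rewrite /B h1 negbK => /existsP [a /andP [ha hu]].
rewrite -hb in ha; exists a; rewrite ha pat_neq0 /=; apply/existsP; exists j.
by move: hu; rewrite /adjmx !mxE conjC_eq0 => ->.
Qed.
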